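(* Let $v^1_p$ be the positive solution of $-(tv')'=t|v|^{p-1}v$ on $(0,1)$, $v'(0)=0$, $v(1)=0$, and let $$\nu_1(p)=\min\Big\{\frac{\int_0^1 t\big(|\phi'|^2-p|v^1_p|^{p-1}\phi^2\big)dt}{\int_0^1 t^{-1}\phi^2dt}:\ \phi\in\mathcal H_{0,\mathrm{rad}},\ \phi\neq0\Big\}$$ be the (unique) negative radial singular eigenvalue associated with $v^1_p$. Then $\lim_{p\to\infty}\nu_1(p)=-1$.
   Context: $\mathcal H_{0,\mathrm{rad}}$ is the space of radial functions $w\in H^1_0(B)$ ($B$ the unit disc of $\mathbb R^2$) with $\int_B|x|^{-2}w^2dx<\infty$; in the radial variable, functions $\phi$ on $(0,1)$ with $\int_0^1 t|\phi'|^2dt<\infty$, $\int_0^1t^{-1}\phi^2dt<\infty$, $\phi(1)=0$. It is known that this minimum is attained and satisfies $-1<\nu_1(p)<0$ for every $p>1$. *)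

(* Defs.v *)
From Stdlib Require Import Reals Lra.
Open Scope R_scope.

Definition powp (x a : R) : R := if Rle_dec x 0 then 0 else Rpower x a.

Definition RI_on (f : R -> R) (a b l : R) : Prop :=
  exists pr : Riemann_integrable f a b, RiemannInt pr = l.

Definition imp_int01 (f : R -> R) (l : R) : Prop :=
  (forall e, 0 < e <= 1 -> exists I, RI_on f e 1 I) /\
  (forall eps, 0 < eps -> exists delta, 0 < delta /\
     forall e I, 0 < e < delta -> e <= 1 -> RI_on f e 1 I -> Rabs (I - l) < eps).

Definition left_cont_at1 (f : R -> R) : Prop :=
  forall eps, 0 < eps -> exists delta, 0 < delta /\
    forall s, 1 - delta < s <= 1 -> Rabs (f s - f 1) < eps.

Definition LE_positive_solution (p : R) (v : R -> R) : Prop :=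
  (forall t, 0 <= t < 1 -> 0 < v t) /\
  v 1 = 0 /\
  left_cont_at1 v /\
  derivable_pt_lim v 0 0 /\
  exists dv : R -> R,
    (forall t, 0 < t < 1 -> derivable_pt_lim v t (dv t)) /\
    (forall t, 0 < t < 1 ->
       derivable_pt_lim (fun s => s * dv s) t
         (- (t * (powp (Rabs (v t)) (p - 1) * v t)))).

(* Rayleigh quotients of the radial singular eigenvalue problem:
   q = int_0^1 t (|phi'|^2 - p |v|^(p-1) phi^2) dt / int_0^1 t^-1 phi^2 dt,
   phi ranging over nonzero radial test functions in H_{0,rad}
   (here: phi continuous on (0,1], C^1-differentiable on (0,1), phi(1)=0,
   int t|phi'|^2 < oo and int t^-1 phi^2 < oo). *)
Definition rayleigh_set (p : R) (v : R -> R) (q : R) : Prop :=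
  exists (phi dphi : R -> R) (A C N : R),
    (forall t, 0 < t < 1 -> derivable_pt_lim phi t (dphi t)) /\
    (forall t, 0 < t < 1 -> continuity_pt phi t) /\
    left_cont_at1 phi /\
    phi 1 = 0 /\
    (exists t, 0 < t <= 1 /\ phi t <> 0) /\
    imp_int01 (fun t => t * (dphi t)^2) A /\
    imp_int01 (fun t => (phi t)^2 / t) C /\
    imp_int01 (fun t => t * ((dphi t)^2 - p * powp (Rabs (v t)) (p - 1) * (phi t)^2)) N /\
    q = N / C.

(* Greatest lower bound of a set of reals (equals the minimum when attained). *)
Definition is_glb_R (E : R -> Prop) (m : R) : Prop :=
  (forall x, E x -> m <= x) /\ (forall b, (forall x, E x -> b <= x) -> b <= m).

(* Main.v *)
Require Import Defs.
From Stdlib Require Import Reals.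
From Coquelicot Require Import Coquelicot.
From Stdlib Require Import Reals Lra Lia ClassicalEpsilon Classical.
Open Scope R_scope.

Lemma mvt_open (h dh : R -> R) x y :
  x < y -> (forall c, x <= c <= y -> continuity_pt h c) ->
  (forall c, x < c < y -> derivable_pt_lim h c (dh c)) ->
  exists c, x < c < y /\ h y - h x = dh c * (y - x).
Proof.
  intros Hxy Hc Hd.
  assert (pr1 : forall c, x < c < y -> derivable_pt h c).
  { intros c Hc'. exists (dh c). apply Hd; auto. }
  assert (pr2 : forall c, x < c < y -> derivable_pt id c).
  { intros c _. apply derivable_pt_id. }
  destruct (MVT h id x y pr1 pr2 Hxy Hc) as [c [P E]].
  { intros; apply derivable_continuous_pt, derivable_pt_id. }
  exists c; split; auto.
  rewrite (derive_pt_eq_0 h c (dh c) (pr1 c P) (Hd c P)) in E.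
  rewrite (derive_pt_eq_0 id c 1 (pr2 c P) (derivable_pt_lim_id c)) in E.
  unfold id in E. lra.
Qed.

Lemma rs_tele (F h dh : R -> R) (a b : R) (tag : R -> R -> R) :
  (forall x y, a <= x -> x < y -> y <= b ->
     x < tag x y < y /\ h y - h x = dh (tag x y) * (y - x)) ->
  (forall c, a < c < b -> dh c <= F c) ->
  forall l x, sorted Rle (x :: l) -> a <= x -> seq.last x l <= b ->
    h (seq.last x l) - h x <= Riemann_sum F (SF_seq_f2 tag (x :: l)).
Proof.
  intros Ht HF l. induction l as [|y l IH]; intros x Hs Hax Hb.
  - simpl. unfold Riemann_sum. simpl. unfold zero; simpl. lra.
  - rewrite SF_cons_f2 by (simpl; lia).
    rewrite Riemann_sum_cons. simpl seq.head.
    destruct Hs as [Hxy Hs].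
    assert (Hyl : y <= seq.last y l).
    { pose proof (sorted_last (y :: l) 0 Hs) as K. simpl in K.
      apply (K ltac:(lia) y). }
    simpl seq.last in Hb.
    specialize (IH y Hs ltac:(lra) Hb). simpl seq.last.
    change (SF_h (SF_seq_f2 tag (y :: l))) with y.
    unfold plus, scal; simpl. unfold mult; simpl.
    destruct (Rle_lt_or_eq_dec x y Hxy) as [Hlt|Heq].
    + destruct (Ht x y Hax Hlt ltac:(lra)) as [[H1 H2] H3].
      assert (dh (tag x y) <= F (tag x y)) by (apply HF; lra).
      assert ((y - x) * dh (tag x y) <= (y - x) * F (tag x y)).
      { apply Rmult_le_compat_l; lra. }
      lra.
    + subst y. replace (x - x) with 0 by ring. lra.
Qed.

Lemma darboux (F h dh : R -> R) a b I : a < b -> is_RInt F a b I ->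
  (forall x, a <= x <= b -> continuity_pt h x) ->
  (forall x, a < x < b -> derivable_pt_lim h x (dh x)) ->
  (forall x, a < x < b -> dh x <= F x) -> h b - h a <= I.
Proof.
  intros Hab HI Hc Hd HF.
  set (P := fun x y c => x <= y -> x <= c <= y /\
     (a <= x -> x < y -> y <= b -> x < c < y /\ h y - h x = dh c * (y - x))).
  assert (Ex : forall x y, exists c, P x y c).
  { intros x y. destruct (Rle_dec x y) as [Hxy|Hxy].
    - destruct (Rle_lt_or_eq_dec x y Hxy) as [Hlt|Heq].
      + destruct (Rle_dec a x) as [Hax|Hax]; [destruct (Rle_dec y b) as [Hyb|Hyb]|].
        * destruct (mvt_open h dh x y Hlt) as [c [Hc1 Hc2]].
          { intros; apply Hc; lra. } { intros; apply Hd; lra. }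
          exists c; intros _; split; [lra|auto].
        * apply Rnot_le_lt in Hyb. exists x; intros _; split; [lra|intros; lra].
        * apply Rnot_le_lt in Hax. exists x; intros _; split; [lra|intros; lra].
      + exists x; intros _; split; [lra|intros; lra].
    - apply Rnot_le_lt in Hxy. exists x; intros H; exfalso; lra. }
  set (tag := fun x y => epsilon (inhabits 0) (P x y)).
  assert (Htag : forall x y, P x y (tag x y)).
  { intros x y. unfold tag. apply epsilon_spec. apply Ex. }
  apply Rnot_lt_le; intros Hlt.
  set (eps := h b - h a - I).
  assert (Heps : 0 < eps) by (unfold eps; lra).
  assert (HT : forall x y, a <= x -> x < y -> y <= b ->
     x < tag x y < y /\ h y - h x = dh (tag x y) * (y - x)).
  { intros x y H1 H2 H3. apply (proj2 (Htag x y ltac:(lra))); auto. }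
  assert (HT2 : forall x y, x <= y -> x <= tag x y <= y).
  { intros x y H. apply (proj1 (Htag x y H)). }
  pose proof (HI _ (locally_ball I (mkposreal eps Heps))) as H.
  simpl in H. destruct H as [d Hd'].
  destruct (nfloor_ex ((b - a) / d)) as [n [Hn1 Hn2]].
  { apply Rdiv_le_0_compat; [lra| apply cond_pos]. }
  assert (Hdpos := cond_pos d).
  destruct (Riemann_fine_unif_part tag a b n HT2 ltac:(lra)) as [S1 [S2 [S3 S4]]].
  assert (Hstep : seq_step (SF_lx (SF_seq_f2 tag (unif_part a b n))) < d).
  { eapply Rle_lt_trans; [apply S1|].
    apply (Rmult_lt_reg_r (INR n + 1)). pose proof (pos_INR n); lra.
    unfold Rdiv. rewrite Rmult_assoc, Rinv_l by (pose proof (pos_INR n); lra).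
    rewrite Rmult_1_r.
    apply (Rmult_lt_reg_r (/ d)). apply Rinv_0_lt_compat; auto.
    replace (d * (INR n + 1) * / d) with (INR n + 1) by (field; lra). exact Hn2. }
  specialize (Hd' _ Hstep).
  rewrite Rmin_left, Rmax_right in Hd' by lra.
  specialize (Hd' (conj S2 (conj S3 S4))).
  rewrite sign_eq_1 in Hd' by lra. unfold ball in Hd'; simpl in Hd'. unfold AbsRing_ball, abs, minus, plus, opp, scal in Hd'; simpl in Hd'. unfold mult in Hd'; simpl in Hd'. rewrite Rmult_1_l in Hd'.
  change (Rabs (Riemann_sum F (SF_seq_f2 tag (unif_part a b n)) - I) < eps) in Hd'.
  assert (Hs : sorted Rle (unif_part a b n)) by (apply unif_part_sort; lra).
  destruct (unif_part a b n) as [|x l] eqn:El.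
  { simpl in S3, S4. lra. }
  pose proof (rs_tele F h dh a b tag HT HF l x Hs) as K.
  simpl in S3. subst x.
  change (seq.last (SF_h (SF_seq_f2 tag (a :: l))) (SF_lx (SF_seq_f2 tag (a :: l))) = b) in S4.
  rewrite SF_lx_f2 in S4 by (simpl; lia). simpl in S4.
  rewrite S4 in K. specialize (K ltac:(lra) ltac:(lra)).
  apply Rabs_def2 in Hd'. unfold eps in *. lra.
Qed.

Lemma cont_c (f : R -> R) x : continuity_pt f x -> continuous f x.
Proof. intros H. apply continuity_pt_filterlim in H. exact H. Qed.

Lemma deriv_loc (f g : R -> R) x l d : 0 < d ->
  (forall y, Rabs (y - x) < d -> f y = g y) ->
  derivable_pt_lim f x l -> derivable_pt_lim g x l.
Proof.
  intros Hd He H. apply is_derive_Reals. apply is_derive_ext_loc with f.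
  exists (mkposreal d Hd). intros y Hy. apply He. exact Hy.
  apply is_derive_Reals; auto.
Qed.

Lemma mono_up (h dh : R -> R) x y : x <= y ->
  (forall c, x <= c <= y -> continuity_pt h c) ->
  (forall c, x < c < y -> derivable_pt_lim h c (dh c)) ->
  (forall c, x < c < y -> 0 <= dh c) -> h x <= h y.
Proof.
  intros Hxy Hc Hd Hp. destruct (Rle_lt_or_eq_dec x y Hxy) as [Hlt|Heq].
  - destruct (mvt_open h dh x y Hlt Hc Hd) as [c [Hc1 Hc2]].
    assert (0 <= dh c * (y - x)) by (apply Rmult_le_pos; [apply Hp; lra|lra]). lra.
  - subst; lra.
Qed.

Definition Qp (p x : R) := powp (Rabs x) (p - 1).
Definition Pp (p x : R) := Qp p x * x.

Lemma Qp_pos p x : 0 < x -> Qp p x = Rpower x (p - 1).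
Proof. intros Hx. unfold Qp, powp. rewrite Rabs_right by lra.
  destruct (Rle_dec x 0); [lra|reflexivity]. Qed.

Lemma Qp_0 p : Qp p 0 = 0.
Proof. unfold Qp, powp. rewrite Rabs_R0. destruct (Rle_dec 0 0); [reflexivity|lra]. Qed.

Lemma Qp_nonneg p x : 0 <= Qp p x.
Proof. unfold Qp, powp. destruct (Rle_dec (Rabs x) 0); [lra|].
  unfold Rpower. left; apply exp_pos. Qed.

Lemma Pp_pos p x : 0 < x -> Pp p x = Rpower x p.
Proof. intros Hx. unfold Pp. rewrite Qp_pos by auto.
  rewrite <- (Rpower_1 x) at 2 by auto. rewrite <- Rpower_plus. f_equal; ring. Qed.

Lemma Pp_0 p : Pp p 0 = 0.
Proof. unfold Pp. ring. Qed.

Lemma Pp_nonneg p x : 0 <= x -> 0 <= Pp p x.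
Proof. intros. unfold Pp. apply Rmult_le_pos; auto. apply Qp_nonneg. Qed.

Lemma Qp_deriv p x : 0 < x -> derivable_pt_lim (Qp p) x ((p - 1) * Rpower x (p - 1 - 1)).
Proof.
  intros Hx. apply deriv_loc with (f := fun y => Rpower y (p - 1)) (d := x); auto.
  intros y Hy. rewrite Qp_pos; auto. apply Rabs_def2 in Hy. lra.
  apply derivable_pt_lim_power; auto.
Qed.

Lemma Pp_deriv p x : 0 < x -> derivable_pt_lim (Pp p) x (p * Qp p x).
Proof.
  intros Hx. apply deriv_loc with (f := fun y => Rpower y p) (d := x); auto.
  intros y Hy. rewrite Pp_pos; auto. apply Rabs_def2 in Hy. lra.
  rewrite Qp_pos by auto. apply derivable_pt_lim_power; auto.
Qed.

Lemma Qp_cont p x : 1 < p -> 0 <= x -> continuity_pt (Qp p) x.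
Proof.
  intros Hp Hx. destruct (Rle_lt_or_eq_dec 0 x Hx) as [Hlt|Heq].
  - apply derivable_continuous_pt. exists ((p - 1) * Rpower x (p - 1 - 1)).
    apply Qp_deriv; auto.
  - subst x. intros eps Heps.
    exists (Rpower eps (/ (p - 1))). split.
    + unfold Rpower; apply Rlt_gt, exp_pos.
    + intros y [_ Hy]. simpl in Hy. unfold R_dist in Hy. rewrite Rminus_0_r in Hy.
      simpl. unfold R_dist. rewrite Qp_0, Rminus_0_r.
      rewrite Rabs_right by (apply Rle_ge, Qp_nonneg).
      unfold Qp, powp. destruct (Rle_dec (Rabs y) 0) as [H0|H0]; [lra|].
      apply Rnot_le_lt in H0.
      apply Rlt_le_trans with (Rpower (Rpower eps (/ (p - 1))) (p - 1)).
      * apply Rlt_Rpower_l; lra.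
      * rewrite Rpower_mult. replace (/ (p - 1) * (p - 1)) with 1 by (field; lra).
        rewrite Rpower_1; lra.
Qed.

Lemma Pp_cont p x : 1 < p -> 0 <= x -> continuity_pt (Pp p) x.
Proof.
  intros Hp Hx. unfold Pp.
  apply (continuity_pt_mult (Qp p) (fun y => y)). apply Qp_cont; auto.
  apply derivable_continuous_pt, derivable_pt_id.
Qed.

Lemma Pp_mono p x y : 1 < p -> 0 <= x <= y -> Pp p x <= Pp p y.
Proof.
  intros Hp [H1 H2]. destruct (Rle_lt_or_eq_dec 0 x H1) as [Hlt|Heq].
  - rewrite !Pp_pos by lra. apply Rle_Rpower_l; lra.
  - subst x. rewrite Pp_0. apply Pp_nonneg; lra.
Qed.

Lemma Pp_eq p x : Pp p x = Qp p x * x.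
Proof. reflexivity. Qed.

Lemma RInt_correct_R (f : R -> R) a b : ex_RInt f a b -> is_RInt f a b (RInt f a b).
Proof. intros H. apply (@RInt_correct R_CompleteNormedModule). exact H. Qed.

Lemma ex_RInt_cont_R (f : R -> R) a b :
  (forall z, Rmin a b <= z <= Rmax a b -> continuity_pt f z) -> ex_RInt f a b.
Proof. intros H. apply (@ex_RInt_continuous R_CompleteNormedModule).
  intros; apply cont_c; auto. Qed.

Lemma RInt_Chasles_R (f : R -> R) a b c : ex_RInt f a b -> ex_RInt f b c ->
  RInt f a b + RInt f b c = RInt f a c.
Proof. intros H1 H2. apply (@RInt_Chasles R_CompleteNormedModule); auto. Qed.

Lemma RInt_plus_R (f g : R -> R) a b : ex_RInt f a b -> ex_RInt g a b ->
  RInt (fun x => f x + g x) a b = RInt f a b + RInt g a b.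
Proof. intros H1 H2. apply (@RInt_plus R_CompleteNormedModule); auto. Qed.

Lemma ex_RInt_plus_R (f g : R -> R) a b : ex_RInt f a b -> ex_RInt g a b ->
  ex_RInt (fun x => f x + g x) a b.
Proof. intros H1 H2. apply (@ex_RInt_plus R_NormedModule); auto. Qed.

Lemma RInt_ext_R (f g : R -> R) a b : (forall x, Rmin a b < x < Rmax a b -> f x = g x) ->
  RInt f a b = RInt g a b.
Proof. intros H. apply (@RInt_ext R_CompleteNormedModule); auto. Qed.

Lemma ex_RInt_ext_R (f g : R -> R) a b : (forall x, Rmin a b < x < Rmax a b -> f x = g x) ->
  ex_RInt f a b -> ex_RInt g a b.
Proof. intros H. apply (@ex_RInt_ext R_NormedModule); auto. Qed.

Lemma RInt_point_R (f : R -> R) a : RInt f a a = 0.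
Proof. apply (@RInt_point R_CompleteNormedModule). Qed.

Lemma ex_RInt_sub1 (f : R -> R) a b c : a <= b <= c -> ex_RInt f a c -> ex_RInt f a b.
Proof. intros. apply (@ex_RInt_Chasles_1 R_CompleteNormedModule) with c; auto. Qed.
Lemma ex_RInt_sub2 (f : R -> R) a b c : a <= b <= c -> ex_RInt f a c -> ex_RInt f b c.
Proof. intros. apply (@ex_RInt_Chasles_2 R_CompleteNormedModule) with a; auto. Qed.

Lemma ex_RInt_bound (f : R -> R) a b : a <= b -> ex_RInt f a b ->
  exists B, 0 <= B /\ forall t, a <= t <= b -> Rabs (f t) <= B.
Proof.
  intros Hab H. destruct (@ex_RInt_ub R_NormedModule f a b H) as [B HB].
  exists (Rmax 0 B). split. apply Rmax_l. intros t Ht.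
  eapply Rle_trans; [|apply Rmax_r]. apply HB. rewrite Rmin_left, Rmax_right; lra.
Qed.

Lemma RInt_abs_le (f : R -> R) a b B : a <= b -> ex_RInt f a b ->
  (forall t, a <= t <= b -> Rabs (f t) <= B) -> Rabs (RInt f a b) <= (b - a) * B.
Proof. intros. apply abs_RInt_le_const; auto. Qed.

Lemma derive_RInt_R (f : R -> R) a t : (forall x, continuity_pt f x) ->
  derivable_pt_lim (fun b => RInt f a b) t (f t).
Proof.
  intros Hc. apply is_derive_Reals.
  apply (@is_derive_RInt R_CompleteNormedModule f (fun b => RInt f a b) a t).
  apply filter_forall. intros b. apply RInt_correct_R.
  apply ex_RInt_cont_R; auto. apply cont_c; auto.
Qed.

Lemma imp_use f l : imp_int01 f l ->
  (forall e, 0 < e <= 1 -> ex_RInt f e 1) /\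
  (forall eta, 0 < eta -> exists d, 0 < d /\
     forall e, 0 < e < d -> e <= 1 -> Rabs (RInt f e 1 - l) < eta).
Proof.
  intros [H1 H2]. split.
  - intros e He. destruct (H1 e He) as [I [pr _]]. apply ex_RInt_Reals_1; exact pr.
  - intros eta Heta. destruct (H2 eta Heta) as [d [Hd H]]. exists d; split; auto.
    intros e He He1. destruct (H1 e (conj (proj1 He) He1)) as [I [pr HI]].
    rewrite (RInt_Reals f e 1 pr). apply (H e (RiemannInt pr)); auto. exists pr; auto.
Qed.

Lemma cont_inv c x : 0 < x -> continuity_pt (fun t => c / t) x.
Proof.
  intros Hx. apply (continuity_pt_div (fct_cte c) id).
  apply continuity_pt_const; unfold constant; auto.
  apply derivable_continuous_pt, derivable_pt_id. unfold id; lra.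
Qed.

Lemma RInt_inv a b c : 0 < a -> a <= b -> RInt (fun t => c / t) a b = c * (ln b - ln a).
Proof.
  intros Ha Hab. apply (@is_RInt_unique R_CompleteNormedModule).
  replace (c * (ln b - ln a)) with (minus (c * ln b) (c * ln a))
    by (unfold minus, plus, opp; simpl; ring).
  apply (@is_RInt_derive R_CompleteNormedModule (fun t => c * ln t)).
  - intros x Hx. rewrite Rmin_left, Rmax_right in Hx by lra. apply is_derive_Reals.
    replace (c / x) with (c * / x) by (unfold Rdiv; ring).
    apply (derivable_pt_lim_scal ln). apply derivable_pt_lim_ln; lra.
  - intros x Hx. rewrite Rmin_left, Rmax_right in Hx by lra. apply cont_c.
    apply cont_inv; lra.
Qed.

Lemma RInt_const_R a b c : RInt (fun _ => c) a b = (b - a) * c.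
Proof. rewrite (@RInt_const R_CompleteNormedModule). reflexivity. Qed.

Lemma RInt_le_R (f g : R -> R) a b : a <= b -> ex_RInt f a b -> ex_RInt g a b ->
  (forall x, a < x < b -> f x <= g x) -> RInt f a b <= RInt g a b.
Proof. apply RInt_le. Qed.

Lemma Rabs_aux x y : Rabs (y - (x + y)) = Rabs x.
Proof. replace (y - (x + y)) with (- x) by ring. apply Rabs_Ropp. Qed.

Lemma imp_of_cont (G Gc : R -> R) : (forall t, continuity_pt Gc t) ->
  (forall t, 0 < t < 1 -> G t = Gc t) -> imp_int01 G (RInt Gc 0 1).
Proof.
  intros Hc He.
  assert (exG : forall e, 0 <= e <= 1 -> ex_RInt G e 1).
  { intros e H. apply ex_RInt_ext_R with Gc.
    intros x Hx. rewrite Rmin_left, Rmax_right in Hx by lra. symmetry; apply He; lra.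
    apply ex_RInt_cont_R. intros; apply Hc. }
  assert (Eq : forall e, 0 <= e <= 1 -> RInt G e 1 = RInt Gc e 1).
  { intros e H. apply RInt_ext_R. intros x Hx. rewrite Rmin_left, Rmax_right in Hx by lra.
    apply He; lra. }
  assert (exGc : forall x y, ex_RInt Gc x y) by (intros; apply ex_RInt_cont_R; intros; apply Hc).
  split.
  - intros e He'. exists (RInt G e 1). exists (ex_RInt_Reals_0 _ _ _ (exG e ltac:(lra))).
    symmetry; apply RInt_Reals.
  - intros eps Heps. destruct (ex_RInt_bound Gc 0 1 ltac:(lra) (exGc 0 1)) as [B [HB0 HB]].
    exists (eps / (B + 1)). split. apply Rdiv_lt_0_compat; lra.
    intros e I Hee He1 [pr Hpr]. rewrite <- Hpr, <- RInt_Reals, Eq by lra.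
    rewrite <- (RInt_Chasles_R Gc 0 e 1) by auto.
    rewrite Rabs_aux.
    eapply Rle_lt_trans. apply (RInt_abs_le Gc 0 e B). lra. auto. intros; apply HB; lra.
    apply Rle_lt_trans with (eps / (B + 1) * B). apply Rmult_le_compat_r; lra.
    apply (Rmult_lt_reg_r (B + 1)). lra.
    replace (eps / (B + 1) * B * (B + 1)) with (eps * B) by (field; lra). nra.
Qed.

Lemma darboux_up (F h dh : R -> R) a b I : a < b -> is_RInt F a b I ->
  (forall x, a <= x <= b -> continuity_pt h x) ->
  (forall x, a < x < b -> derivable_pt_lim h x (dh x)) ->
  (forall x, a < x < b -> F x <= dh x) -> I <= h b - h a.
Proof.
  intros Hab HI Hc Hd HF.
  assert (HI' : is_RInt (fun x => - F x) a b (- I)).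
  { apply (@is_RInt_opp R_NormedModule). exact HI. }
  assert (K := darboux (fun x => - F x) (fun x => - h x) (fun x => - dh x) a b (- I) Hab HI').
  assert (- h b - - h a <= - I); [|lra].
  apply K.
  - intros x Hx. apply (continuity_pt_opp h). auto.
  - intros x Hx. apply (derivable_pt_lim_opp h). auto.
  - intros x Hx. specialize (HF x Hx). lra.
Qed.

Lemma D_eq (f : R -> R) t l : derivable_pt_lim f t l -> Derive (fun x => f x) t = l.
Proof. intros H. apply is_derive_unique. apply is_derive_Reals. exact H. Qed.

Lemma ex_D (f : R -> R) t l : derivable_pt_lim f t l -> ex_derive (fun x => f x) t.
Proof. intros H. exists l. apply is_derive_Reals. exact H. Qed.

Lemma ln_ge y : 0 < y -> 1 - / y <= ln y.
Proof.
  intros Hy. assert (H : 1 + ln (/ y) <= exp (ln (/ y))).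
  { destruct (Req_dec (ln (/ y)) 0) as [E|E]. rewrite E, exp_0. lra.
    left; apply exp_ineq1; auto. }
  rewrite exp_ln in H by (apply Rinv_0_lt_compat; auto).
  rewrite ln_Rinv in H by auto. lra.
Qed.

Lemma exp_third : / 2 <= exp (- / 3).
Proof.
  assert (E : exp 1 = exp (/3) * exp (/3) * exp (/3)).
  { rewrite <- !exp_plus. f_equal. field. }
  assert (H3 := exp_le_3).
  assert (exp (/3) <= 2).
  { apply Rnot_lt_le. intros K. assert (0 < exp (/3)) by apply exp_pos.
    assert (8 < exp (/3) * exp (/3) * exp (/3)).
    { assert (4 < exp (/3) * exp (/3)) by nra. nra. }
    lra. }
  rewrite exp_Ropp. apply Rinv_le_contravar. apply exp_pos. auto.
Qed.

Lemma rpow_lower p x : 1 < p -> 0 < x <= / 4 -> / 2 <= Rpower (1 - x / p) p.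
Proof.
  intros Hp Hx. unfold Rpower.
  assert (Hy : 0 < 1 - x / p).
  { assert (x / p < 1). { apply (Rmult_lt_reg_r p). lra. unfold Rdiv.
      rewrite Rmult_assoc, Rinv_l, Rmult_1_r by lra. lra. } lra. }
  assert (H1 := ln_ge (1 - x / p) Hy).
  eapply Rle_trans. apply exp_third. left.
  apply exp_increasing.
  assert (E : 1 - / (1 - x / p) = - x / (p - x)) by (field; split; lra).
  rewrite E in H1.
  assert (p * (- x / (p - x)) > - / 3).
  { replace (p * (- x / (p - x))) with (- (x * p / (p - x))) by (field; lra).
    apply Ropp_lt_contravar. apply (Rmult_lt_reg_r (p - x)). lra.
    unfold Rdiv. rewrite Rmult_assoc, Rinv_l, Rmult_1_r by lra.
    nra. }
  apply Rlt_le_trans with (p * (- x / (p - x))). lra.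
  apply Rmult_le_compat_l; lra.
Qed.

Section Sol.
Variables (p : R) (v dv : R -> R).
Hypothesis Hp : 1 < p.
Hypothesis Hpos : forall t, 0 <= t < 1 -> 0 < v t.
Hypothesis Hv1 : v 1 = 0.
Hypothesis Hlc : left_cont_at1 v.
Hypothesis Hd0 : derivable_pt_lim v 0 0.
Hypothesis Hdv : forall t, 0 < t < 1 -> derivable_pt_lim v t (dv t).
Hypothesis Hdd : forall t, 0 < t < 1 ->
  derivable_pt_lim (fun s => s * dv s) t (- (t * (powp (Rabs (v t)) (p - 1) * v t))).

Definition cl (t : R) := Rmax 0 (Rmin t 1).
Definition vc (t : R) := v (cl t).
Definition fc (t : R) := Pp p (vc t).
Definition m (t : R) : R := RInt (fun s => s * fc s) 0 t.
Definition M := v 0.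

Lemma v_nonneg t : 0 <= t <= 1 -> 0 <= v t.
Proof. intros H. destruct (Req_dec t 1) as [->|Hn]; [rewrite Hv1; lra|].
  left; apply Hpos; lra. Qed.

Lemma M_pos : 0 < M.
Proof. unfold M. apply Hpos; lra. Qed.

Lemma v_contw y : 0 <= y <= 1 -> forall eps, 0 < eps -> exists d, 0 < d /\
  forall z, 0 <= z <= 1 -> Rabs (z - y) < d -> Rabs (v z - v y) < eps.
Proof.
  intros Hy eps Heps. destruct (Req_dec y 1) as [->|Hn].
  - destruct (Hlc eps Heps) as [d [Hd H]]. exists d; split; auto.
    intros z Hz Hzd. apply H. apply Rabs_def2 in Hzd. lra.
  - assert (Hc : continuity_pt v y).
    { apply derivable_continuous_pt. destruct (Req_EM_T y 0) as [->|H0].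
      exists 0; auto. exists (dv y); apply Hdv; lra. }
    destruct (Hc eps Heps) as [d [Hd H]]. exists d; split; auto.
    intros z Hz Hzd. destruct (Req_dec z y) as [->|Hzy].
    + rewrite Rminus_diag, Rabs_R0; auto.
    + apply (H z). split. split. exact I. intro E; apply Hzy; auto. exact Hzd.
Qed.

Lemma cl_in t : 0 <= cl t <= 1.
Proof. unfold cl, Rmax, Rmin. repeat destruct Rle_dec; lra. Qed.
Lemma cl_id t : 0 <= t <= 1 -> cl t = t.
Proof. intros. unfold cl, Rmax, Rmin. repeat destruct Rle_dec; lra. Qed.
Lemma cl_lip s t : Rabs (cl s - cl t) <= Rabs (s - t).
Proof. unfold cl, Rmax, Rmin. repeat destruct Rle_dec;
  unfold Rabs; repeat destruct Rcase_abs; lra. Qed.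

Lemma vc_id t : 0 <= t <= 1 -> vc t = v t.
Proof. intros; unfold vc; rewrite cl_id; auto. Qed.

Lemma vc_nonneg t : 0 <= vc t.
Proof. unfold vc. apply v_nonneg, cl_in. Qed.

Lemma vc_cont t : continuity_pt vc t.
Proof.
  intros eps Heps. destruct (v_contw (cl t) (cl_in t) eps Heps) as [d [Hd H]].
  exists d; split; [lra|]. intros x [_ Hx]. simpl in *. unfold R_dist in *.
  unfold vc. apply H. apply cl_in. eapply Rle_lt_trans; [apply cl_lip|auto].
Qed.

Lemma fc_cont t : continuity_pt fc t.
Proof.
  unfold fc. apply (continuity_pt_comp vc (Pp p)). apply vc_cont.
  apply Pp_cont; auto. apply vc_nonneg.
Qed.

Lemma fc_nonneg t : 0 <= fc t.
Proof. unfold fc. apply Pp_nonneg, vc_nonneg. Qed.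

Lemma ig_cont t : continuity_pt (fun s => s * fc s) t.
Proof. apply (continuity_pt_mult (fun s => s) fc).
  apply derivable_continuous_pt, derivable_pt_id. apply fc_cont. Qed.

Lemma ex_ig a b : ex_RInt (fun s => s * fc s) a b.
Proof. apply ex_RInt_cont_R. intros; apply ig_cont. Qed.

Lemma m_deriv t : derivable_pt_lim m t (t * fc t).
Proof.
  unfold m. apply (derive_RInt_R (fun s => s * fc s)). apply ig_cont.
Qed.

Lemma m_cont t : continuity_pt m t.
Proof. apply derivable_continuous_pt. exists (t * fc t). apply m_deriv. Qed.

Lemma m0 : m 0 = 0.
Proof. unfold m. apply RInt_point_R. Qed.

Lemma fc_eq t : 0 <= t <= 1 -> fc t = Pp p (v t).
Proof. intros; unfold fc; rewrite vc_id; auto. Qed.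

Lemma vc_deriv t : 0 < t < 1 -> derivable_pt_lim vc t (dv t).
Proof.
  intros Ht. apply deriv_loc with (f := v) (d := Rmin t (1 - t)).
  apply Rmin_pos; lra.
  intros y Hy. apply Rabs_def2 in Hy. assert (Rmin t (1 - t) <= t) by apply Rmin_l.
  assert (Rmin t (1 - t) <= 1 - t) by apply Rmin_r.
  rewrite vc_id; auto; lra. apply Hdv; auto.
Qed.

Lemma fc_deriv t : 0 < t < 1 -> derivable_pt_lim fc t (p * Qp p (v t) * dv t).
Proof.
  intros Ht. unfold fc.
  replace (p * Qp p (v t) * dv t) with (p * Qp p (vc t) * dv t) by (rewrite vc_id; auto; lra).
  apply (derivable_pt_lim_comp vc (Pp p)). apply vc_deriv; auto.
  apply Pp_deriv. rewrite vc_id by lra. apply Hpos; lra.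
Qed.

Lemma D_const s t : 0 < s < 1 -> 0 < t < 1 -> s * dv s + m s = t * dv t + m t.
Proof.
  intros Hs Ht.
  assert (Hd : forall x, 0 < x < 1 -> derivable_pt_lim (fun y => y * dv y + m y) x 0).
  { intros x Hx. replace 0 with (- (x * (powp (Rabs (v x)) (p - 1) * v x)) + x * fc x).
    apply (derivable_pt_lim_plus (fun y => y * dv y) m x). apply Hdd; auto. apply m_deriv.
    rewrite fc_eq by lra. unfold Pp, Qp. ring. }
  assert (Hc : forall x, 0 < x < 1 -> continuity_pt (fun y => y * dv y + m y) x).
  { intros x Hx. apply derivable_continuous_pt. exists 0. apply Hd; auto. }
  destruct (Rle_lt_dec s t) as [Hst|Hst].
  - destruct (Rle_lt_or_eq_dec _ _ Hst) as [Hlt|E]; [|subst; reflexivity].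
    destruct (mvt_open (fun y => y * dv y + m y) (fun _ => 0) s t Hlt) as [c [_ Hc2]].
    intros; apply Hc; lra. intros; apply Hd; lra. lra.
  - destruct (mvt_open (fun y => y * dv y + m y) (fun _ => 0) t s Hst) as [c [_ Hc2]].
    intros; apply Hc; lra. intros; apply Hd; lra. lra.
Qed.

Lemma K1 t : 0 < t < 1 -> t * dv t = - m t.
Proof.
  intros Ht.
  set (c := /2 * dv (/2) + m (/2)).
  assert (Hc : forall s, 0 < s < 1 -> s * dv s + m s = c).
  { intros s Hs. unfold c. apply D_const; lra. }
  enough (c = 0) by (specialize (Hc t Ht); lra).
  destruct (Req_dec c 0) as [E|Hne]; auto. exfalso.
  assert (Hac : 0 < Rabs c) by (apply Rabs_pos_lt; auto).
  destruct (m_cont 0 (Rabs c / 2) ltac:(lra)) as [d1 [Hd1 H1]].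
  destruct (v_contw 0 ltac:(lra) (Rabs c / 8) ltac:(lra)) as [d2 [Hd2 H2]].
  assert (Hmin : 0 < Rmin (Rmin d1 d2) 1) by (repeat apply Rmin_pos; lra).
  set (s := Rmin (Rmin d1 d2) 1 / 4).
  assert (Hs1 : s <= d1 / 4) by (unfold s; pose proof (Rmin_l (Rmin d1 d2) 1); pose proof (Rmin_l d1 d2); lra).
  assert (Hs2 : s <= d2 / 4) by (unfold s; pose proof (Rmin_l (Rmin d1 d2) 1); pose proof (Rmin_r d1 d2); lra).
  assert (Hs3 : s <= 1 / 4) by (unfold s; pose proof (Rmin_r (Rmin d1 d2) 1); lra).
  assert (Hs0 : 0 < s) by (unfold s; lra).
  destruct (mvt_open v dv s (2 * s) ltac:(lra)) as [xi [Hxi E]].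
  { intros x Hx. apply derivable_continuous_pt. exists (dv x). apply Hdv; lra. }
  { intros x Hx. apply Hdv; lra. }
  assert (Hm : Rabs (m xi) < Rabs c / 2).
  { assert (K := H1 xi). simpl in K. unfold R_dist in K. rewrite m0, !Rminus_0_r in K.
    apply K. split. split. exact I. lra. rewrite Rabs_right; lra. }
  assert (Ha : Rabs (v (2 * s) - v 0) < Rabs c / 8).
  { apply H2. lra. rewrite Rminus_0_r, Rabs_right; lra. }
  assert (Hb : Rabs (v s - v 0) < Rabs c / 8).
  { apply H2. lra. rewrite Rminus_0_r, Rabs_right; lra. }
  assert (Hd : Rabs (dv xi * s) < Rabs c / 4).
  { replace (dv xi * s) with (v (2 * s) - v s) by (rewrite E; ring). replace (v (2 * s) - v s) with ((v (2 * s) - v 0) - (v s - v 0)) by ring.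
    eapply Rle_lt_trans. apply Rabs_triang. rewrite Rabs_Ropp. lra. }
  rewrite Rabs_mult, (Rabs_right s) in Hd by lra.
  assert (Hx : Rabs (xi * dv xi) = xi * Rabs (dv xi)) by (rewrite Rabs_mult, Rabs_right; lra).
  assert (Hc' := Hc xi ltac:(lra)).
  assert (Rabs c - Rabs (m xi) <= Rabs (xi * dv xi)).
  { replace (xi * dv xi) with (c - m xi) by lra. apply Rabs_triang_inv. }
  assert (xi * Rabs (dv xi) <= 2 * s * Rabs (dv xi)).
  { apply Rmult_le_compat_r. apply Rabs_pos. lra. }
  lra.
Qed.

Lemma fc_pos t : 0 <= t < 1 -> 0 < fc t.
Proof. intros. rewrite fc_eq by lra. rewrite Pp_pos by (apply Hpos; lra).
  unfold Rpower; apply exp_pos. Qed.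

Lemma m_pos t : 0 < t <= 1 -> 0 < m t.
Proof.
  intros Ht. destruct (mvt_open m (fun s => s * fc s) 0 t ltac:(lra)) as [c [Hc E]].
  intros; apply m_cont. intros; apply m_deriv.
  rewrite m0 in E. assert (0 < c * fc c * (t - 0)).
  { apply Rmult_lt_0_compat; [apply Rmult_lt_0_compat; [lra|apply fc_pos; lra]|lra]. }
  lra.
Qed.

Lemma m_mono s t : 0 <= s <= t -> m s <= m t.
Proof.
  intros H. apply (mono_up m (fun x => x * fc x)); try lra.
  intros; apply m_cont. intros; apply m_deriv.
  intros c Hc. apply Rmult_le_pos; [lra|apply fc_nonneg].
Qed.

Lemma m_nonneg t : 0 <= t -> 0 <= m t.
Proof. intros. rewrite <- m0. apply m_mono; lra. Qed.

Lemma dv_eq t : 0 < t < 1 -> dv t = - m t / t.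
Proof. intros H. pose proof (K1 t H). field_simplify_eq; lra. Qed.

Lemma v_decr s t : 0 <= s /\ s <= t <= 1 -> v t <= v s.
Proof.
  intros H. rewrite <- (vc_id s), <- (vc_id t) by lra.
  enough (- vc s <= - vc t) by lra.
  apply (mono_up (fun x => - vc x) (fun x => - dv x)); try lra.
  - intros c _. apply (continuity_pt_opp vc). apply vc_cont.
  - intros c Hc. apply (derivable_pt_lim_opp vc). apply vc_deriv; lra.
  - intros c Hc. rewrite dv_eq by lra.
    assert (0 < m c) by (apply m_pos; lra).
    unfold Rdiv. rewrite Ropp_mult_distr_l, Ropp_involutive.
    left; apply Rmult_lt_0_compat; [lra|apply Rinv_0_lt_compat; lra].
Qed.

Lemma v_le_M t : 0 <= t <= 1 -> v t <= M.
Proof. intros. unfold M. apply v_decr; lra. Qed.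

Lemma fc_anti s t : 0 <= s /\ s <= t <= 1 -> fc t <= fc s.
Proof. intros H. rewrite !fc_eq by lra. apply Pp_mono; auto. split.
  apply v_nonneg; lra. apply v_decr; lra. Qed.

Definition c0 := fc 0.

Lemma dsq a x : derivable_pt_lim (fun y => a * y^2 / 2) x (a * x).
Proof. apply is_derive_Reals. auto_derive. auto. field. Qed.

Lemma m_upper t : 0 <= t <= 1 -> m t <= c0 * t^2 / 2.
Proof.
  intros Ht. enough (c0 * 0^2/2 - m 0 <= c0 * t^2/2 - m t) by (rewrite m0 in *; lra).
  apply (mono_up (fun x => c0 * x^2/2 - m x) (fun x => c0 * x - x * fc x)); try lra.
  - intros c _. apply derivable_continuous_pt. exists (c0 * c - c * fc c).
    apply (derivable_pt_lim_minus (fun y => c0 * y^2/2) m). apply dsq. apply m_deriv.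
  - intros c _. apply (derivable_pt_lim_minus (fun y => c0 * y^2/2) m). apply dsq. apply m_deriv.
  - intros c Hc. assert (fc c <= c0) by (unfold c0; apply fc_anti; lra).
    replace (c0 * c - c * fc c) with (c * (c0 - fc c)) by ring.
    apply Rmult_le_pos; lra.
Qed.

Lemma m_lower t : 0 <= t <= 1 -> fc t * t^2 / 2 <= m t.
Proof.
  intros Ht. enough (m 0 - fc t * 0^2/2 <= m t - fc t * t^2/2) by (rewrite m0 in *; lra).
  apply (mono_up (fun x => m x - fc t * x^2/2) (fun x => x * fc x - fc t * x)); try lra.
  - intros c _. apply derivable_continuous_pt. exists (c * fc c - fc t * c).
    apply (derivable_pt_lim_minus m (fun y => fc t * y^2/2)). apply m_deriv. apply dsq.
  - intros c _. apply (derivable_pt_lim_minus m (fun y => fc t * y^2/2)). apply m_deriv. apply dsq.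
  - intros c Hc. assert (fc t <= fc c) by (apply fc_anti; lra).
    replace (c * fc c - fc t * c) with (c * (fc c - fc t)) by ring.
    apply Rmult_le_pos; lra.
Qed.

Lemma v_lower t : 0 <= t <= 1 -> M - c0 * t^2 / 4 <= v t.
Proof.
  intros Ht. rewrite <- (vc_id t) by lra.
  enough (vc 0 + c0 / 2 * 0^2/2 <= vc t + c0 / 2 * t^2/2) as K.
  { rewrite vc_id in K by lra. unfold M. lra. }
  apply (mono_up (fun x => vc x + c0 / 2 * x^2/2) (fun x => dv x + c0 / 2 * x)); try lra.
  - intros c _. apply (continuity_pt_plus vc (fun x => c0 / 2 * x^2/2)). apply vc_cont.
    apply derivable_continuous_pt. exists (c0 / 2 * c). apply dsq.
  - intros c Hc. apply (derivable_pt_lim_plus vc (fun y => c0 / 2 * y^2/2)).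
    apply vc_deriv; lra. apply dsq.
  - intros c Hc. rewrite dv_eq by lra. assert (K := m_upper c ltac:(lra)).
    apply (Rmult_le_reg_r c). lra. rewrite Rmult_0_l.
    replace ((- m c / c + c0 / 2 * c) * c) with (c0 * c^2 / 2 - m c) by (field; lra).
    lra.
Qed.

Lemma c0_ge : 4 * M <= c0.
Proof. pose proof (v_lower 1 ltac:(lra)). rewrite Hv1 in H. lra. Qed.

Definition kf (t : R) := t^2 * fc t / m t - 1.

Lemma kf_bounds t : 0 < t < 1 -> -1 <= kf t <= 1.
Proof.
  intros Ht. unfold kf. assert (Hm := m_pos t ltac:(lra)). assert (Hl := m_lower t ltac:(lra)).
  assert (Hf := fc_nonneg t).
  assert (E : t^2 * fc t / m t * m t = t^2 * fc t) by (field; lra).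
  assert (0 <= t^2 * fc t) by (apply Rmult_le_pos; [apply pow2_ge_0|auto]).
  set (x := t^2 * fc t / m t) in *. split; nra.
Qed.

Lemma kf_deriv t : 0 < t < 1 ->
  derivable_pt_lim kf t ((1 - (kf t)^2)/t - p * t * Qp p (v t)).
Proof.
  intros Ht. assert (Hm := m_pos t ltac:(lra)).
  assert (H1 : derivable_pt_lim (fun y => y^2 * fc y) t
     (INR 2 * t ^ Init.Nat.pred 2 * fc t + t^2 * (p * Qp p (v t) * dv t))).
  { apply (derivable_pt_lim_mult (fun y => y^2) fc). apply derivable_pt_lim_pow. apply fc_deriv; auto. }
  assert (H2 := derivable_pt_lim_div (fun y => y^2 * fc y) m t _ _ H1 (m_deriv t) ltac:(lra)).
  assert (H3 := derivable_pt_lim_minus _ (fct_cte 1) t _ _ H2 (derivable_pt_lim_const 1 t)).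
  match type of H3 with derivable_pt_lim _ _ ?L =>
    replace ((1 - (kf t)^2)/t - p * t * Qp p (v t)) with L end.
  exact H3.
  rewrite dv_eq by lra. unfold kf, Rsqr, fct_cte. simpl. field. split; lra.
Qed.

Lemma picone_alg t x y kk Q : 0 < t ->
  kk * (INR 2 * x ^ Init.Nat.pred 2 * y) + ((1 - kk^2)/t - p * t * Q) * x^2
   <= t * (y^2 - p * Q * x^2) + x^2 / t.
Proof. intros Ht. simpl INR.
  assert (E : t * (y^2 - p*Q*x^2) + x^2/t - (kk * ((1+1) * x ^ Init.Nat.pred 2 * y)
     + ((1-kk^2)/t - p*t*Q)*x^2) = (t*y - kk*x)^2 / t) by (simpl; field; lra).
  assert (0 <= (t*y - kk*x)^2 / t) by (apply Rdiv_le_0_compat; [apply pow2_ge_0|lra]). lra.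
Qed.

Lemma lower_bound q : rayleigh_set p v q -> -1 <= q.
Proof.
  intros [phi [dphi [A [C [N [Hd [Hc [Hlc' [Hph1 [[t0 [Ht0 Hnz]] [HA [HC [HN Hq]]]]]]]]]]]]].
  set (fN := fun t => t * ((dphi t)^2 - p * powp (Rabs (v t)) (p - 1) * (phi t)^2)) in *.
  set (fC := fun t => (phi t)^2 / t) in *.
  destruct (imp_use _ _ HN) as [exN limN]. destruct (imp_use _ _ HC) as [exC limC].
  set (S := fun t => fN t + fC t).
  assert (Key : forall e, 0 < e < 1 -> - (phi e)^2 <= RInt fN e 1 + RInt fC e 1).
  { intros e He.
    assert (exS : ex_RInt S e 1) by (apply ex_RInt_plus_R; [apply exN|apply exC]; lra).
    rewrite <- RInt_plus_R by (first [apply exN|apply exC]; lra).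
    change (RInt (fun x => fN x + fC x) e 1) with (RInt S e 1).
    destruct (ex_RInt_bound S e 1 ltac:(lra) exS) as [B [HB0 HB]].
    apply le_epsilon. intros eta Heta.
    destruct (Hlc' (Rmin 1 (eta / 2)) ltac:(apply Rmin_pos; lra)) as [d1 [Hd1 Hl]].
    set (r := Rmin (Rmin d1 (eta / 2 / (B + 1))) (1 - e) / 2).
    assert (Hr0 : 0 < r).
    { unfold r. assert (0 < eta / 2 / (B + 1)) by (apply Rdiv_lt_0_compat; lra).
      assert (0 < Rmin (Rmin d1 (eta / 2 / (B + 1))) (1 - e)) by (repeat apply Rmin_pos; lra). lra. }
    assert (Hr1 : r < 1 - e) by (unfold r; pose proof (Rmin_r (Rmin d1 (eta / 2 / (B + 1))) (1 - e)); lra).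
    assert (Hr2 : r < d1) by (unfold r; pose proof (Rmin_l (Rmin d1 (eta / 2 / (B + 1))) (1 - e)); pose proof (Rmin_l d1 (eta / 2 / (B + 1))); lra).
    assert (Hr3 : r * B <= eta / 2).
    { assert (r <= eta / 2 / (B + 1) / 2) by (unfold r; pose proof (Rmin_l (Rmin d1 (eta / 2 / (B + 1))) (1 - e)); pose proof (Rmin_r d1 (eta / 2 / (B + 1))); lra).
      apply Rle_trans with (eta / 2 / (B + 1) / 2 * B). apply Rmult_le_compat_r; lra.
      apply (Rmult_le_reg_r (B + 1)). lra.
      replace (eta / 2 / (B + 1) / 2 * B * (B + 1)) with (eta / 2 * (B / 2)) by (field; lra).
      apply Rmult_le_compat_l; lra. }
    set (b := 1 - r).
    assert (Hb : e < b < 1) by (unfold b; lra).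
    assert (exS1 : ex_RInt S e b) by (apply ex_RInt_sub1 with 1; [lra|auto]).
    assert (exS2 : ex_RInt S b 1) by (apply ex_RInt_sub2 with e; [lra|auto]).
    rewrite <- (RInt_Chasles_R S e b 1) by auto.
    assert (T2 : - (eta / 2) <= RInt S b 1).
    { assert (K := RInt_abs_le S b 1 B ltac:(lra) exS2 ltac:(intros; apply HB; lra)).
      apply Rabs_le_between in K. unfold b in *. lra. }
    set (h := fun t => kf t * (phi t)^2).
    set (dh := fun t => ((1 - (kf t)^2)/t - p * t * Qp p (v t)) * (phi t)^2
                         + kf t * (INR 2 * (phi t) ^ Init.Nat.pred 2 * dphi t)).
    assert (Hhd : forall t, 0 < t < 1 -> derivable_pt_lim h t (dh t)).
    { intros t Ht. unfold h, dh.
      apply (derivable_pt_lim_mult kf (fun y => (phi y)^2)). apply kf_deriv; auto.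
      apply (derivable_pt_lim_comp phi (fun y => y^2)). apply Hd; auto.
      apply derivable_pt_lim_pow. }
    assert (T1 : h b - h e <= RInt S e b).
    { apply (darboux S h dh e b). lra. apply RInt_correct_R; auto.
      - intros x Hx. apply derivable_continuous_pt. exists (dh x). apply Hhd; lra.
      - intros x Hx. apply Hhd; lra.
      - intros x Hx. unfold dh, S, fN, fC.
        replace (((1 - kf x ^ 2) / x - p * x * Qp p (v x)) * phi x ^ 2 +
          kf x * (INR 2 * phi x ^ Init.Nat.pred 2 * dphi x)) with
          (kf x * (INR 2 * phi x ^ Init.Nat.pred 2 * dphi x) +
           ((1 - kf x ^ 2) / x - p * x * Qp p (v x)) * phi x ^ 2) by ring.
        apply (picone_alg x (phi x) (dphi x) (kf x) (Qp p (v x))). lra. }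
    assert (Hkb := kf_bounds b ltac:(lra)). assert (Hke := kf_bounds e ltac:(lra)).
    assert (Hhb : - (phi b)^2 <= h b) by (unfold h; assert (0 <= phi b ^2) by apply pow2_ge_0; nra).
    assert (Hhe : h e <= (phi e)^2) by (unfold h; assert (0 <= phi e ^2) by apply pow2_ge_0; nra).
    assert (Hpb : (phi b)^2 <= eta / 2).
    { assert (K := Hl b ltac:(unfold b; lra)). rewrite Hph1, Rminus_0_r in K.
      assert (Rmin 1 (eta/2) <= 1) by apply Rmin_l. assert (Rmin 1 (eta/2) <= eta/2) by apply Rmin_r.
      rewrite <- pow2_abs. assert (0 <= Rabs (phi b)) by apply Rabs_pos. simpl.
      rewrite Rmult_1_r. apply Rle_trans with (1 * (eta / 2)).
      apply Rmult_le_compat; lra. lra. }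
    lra. }
  assert (Small : forall eta d, 0 < eta -> 0 < d -> exists e, 0 < e < d /\ e < 1 /\ (phi e)^2 < eta).
  { intros eta d Heta Hd0'.
    destruct (classic (exists e, 0 < e < d /\ e < 1 /\ (phi e)^2 < eta)) as [H|H]; auto.
    exfalso.
    assert (H' : forall e, 0 < e < d -> e < 1 -> eta <= (phi e)^2).
    { intros e He He1. apply Rnot_lt_le. intro K. apply H. exists e; auto. }
    destruct (limC 1 ltac:(lra)) as [dC [HdC HlC]].
    set (d' := Rmin (Rmin d dC) 1 / 2).
    assert (Hd'0 : 0 < d') by (unfold d'; assert (0 < Rmin (Rmin d dC) 1) by (repeat apply Rmin_pos; lra); lra).
    assert (Hd'1 : d' < d) by (unfold d'; pose proof (Rmin_l (Rmin d dC) 1); pose proof (Rmin_l d dC); lra).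
    assert (Hd'2 : d' < dC) by (unfold d'; pose proof (Rmin_l (Rmin d dC) 1); pose proof (Rmin_r d dC); lra).
    assert (Hd'3 : d' <= 1/2) by (unfold d'; pose proof (Rmin_r (Rmin d dC) 1); lra).
    set (K := (Rabs C + 2) / eta).
    assert (HK : 0 < K) by (unfold K; apply Rdiv_lt_0_compat; [pose proof (Rabs_pos C)|]; lra).
    set (e := d' * exp (- K)).
    assert (He0 : 0 < e) by (unfold e; apply Rmult_lt_0_compat; [lra|apply exp_pos]).
    assert (He1 : e < d').
    { unfold e. assert (exp (- K) < 1). { rewrite <- exp_0. apply exp_increasing. lra. }
      nra. }
    assert (Hln : ln d' - ln e = K).
    { unfold e. rewrite ln_mult, ln_exp by (try apply exp_pos; lra). ring. }
    assert (exe : ex_RInt fC e 1) by (apply exC; lra).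
    assert (ex1 : ex_RInt fC e d') by (apply ex_RInt_sub1 with 1; [lra|auto]).
    assert (ex2 : ex_RInt fC d' 1) by (apply ex_RInt_sub2 with e; [lra|auto]).
    assert (I1 : eta * K <= RInt fC e d').
    { rewrite <- Hln, <- RInt_inv by lra. apply RInt_le_R. lra.
      apply ex_RInt_cont_R. intros z Hz. rewrite Rmin_left, Rmax_right in Hz by lra. apply cont_inv; lra.
      auto. intros x Hx. unfold fC. unfold Rdiv. apply Rmult_le_compat_r.
      left; apply Rinv_0_lt_compat; lra. apply H'; lra. }
    assert (I2 : 0 <= RInt fC d' 1).
    { apply RInt_ge_0. lra. auto. intros x Hx. unfold fC. apply Rdiv_le_0_compat. apply pow2_ge_0. lra. }
    assert (K2 := HlC e ltac:(lra) ltac:(lra)).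
    rewrite <- (RInt_Chasles_R fC e d' 1) in K2 by auto. apply Rabs_def2 in K2.
    assert (eta * K = Rabs C + 2) by (unfold K; field; lra).
    pose proof (Rle_abs C). lra. }
  assert (NC : 0 <= N + C).
  { apply le_epsilon. intros eta Heta.
    destruct (limN (eta / 3) ltac:(lra)) as [dN [HdN HlN]].
    destruct (limC (eta / 3) ltac:(lra)) as [dC [HdC HlC]].
    destruct (Small (eta / 3) (Rmin dN dC) ltac:(lra) ltac:(apply Rmin_pos; lra)) as [e [He [He1 He2]]].
    assert (e < dN) by (pose proof (Rmin_l dN dC); lra).
    assert (e < dC) by (pose proof (Rmin_r dN dC); lra).
    assert (K1' := HlN e ltac:(lra) ltac:(lra)). assert (K2 := HlC e ltac:(lra) ltac:(lra)).
    apply Rabs_def2 in K1'. apply Rabs_def2 in K2.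
    assert (K3 := Key e ltac:(lra)). lra. }
  assert (Cpos : 0 < C).
  { assert (Ht01 : t0 < 1) by (destruct (Req_dec t0 1) as [E|E]; [subst; contradiction|lra]).
    assert (Hap : 0 < Rabs (phi t0)) by (apply Rabs_pos_lt; auto).
    destruct (Hc t0 ltac:(lra) (Rabs (phi t0) / 2) ltac:(lra)) as [d0 [Hd0' Hcl]].
    set (r := Rmin (d0 / 2) ((1 - t0) / 2)).
    assert (Hr0 : 0 < r) by (unfold r; apply Rmin_pos; lra).
    assert (Hr1 : r <= d0 / 2) by apply Rmin_l.
    assert (Hr2 : r <= (1 - t0) / 2) by apply Rmin_r.
    set (beta := (phi t0)^2 / 4).
    assert (Hbeta : 0 < beta).
    { unfold beta. rewrite <- pow2_abs. assert (0 < Rabs (phi t0) ^ 2) by (apply pow_lt; lra). lra. }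
    assert (Hlow : forall t, t0 <= t <= t0 + r -> beta <= fC t).
    { intros t Ht. assert (Habs : Rabs (phi t0) / 2 <= Rabs (phi t)).
      { destruct (Req_dec t t0) as [->|Hne]. lra.
        assert (K := Hcl t).
        assert (K' : Rabs (phi t - phi t0) < Rabs (phi t0) / 2).
        { apply K. split. split. exact I. intro E; apply Hne; auto.
          change (Rabs (t - t0) < d0). rewrite Rabs_right; lra. }
        pose proof (Rabs_triang_inv (phi t0) (phi t)).
        rewrite <- Rabs_Ropp in K'. replace (- (phi t - phi t0)) with (phi t0 - phi t) in K' by ring.
        lra. }
      unfold fC, beta. rewrite <- (pow2_abs (phi t0)), <- (pow2_abs (phi t)).
      assert (Rabs (phi t0) ^ 2 / 4 <= Rabs (phi t) ^ 2).
      { replace (Rabs (phi t0) ^ 2 / 4) with ((Rabs (phi t0) / 2) ^ 2) by field.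
        apply pow_incr. lra. }
      apply Rle_trans with (Rabs (phi t) ^ 2). auto.
      unfold Rdiv. rewrite <- (Rmult_1_r (Rabs (phi t) ^ 2)) at 1.
      apply Rmult_le_compat_l. apply pow2_ge_0.
      rewrite <- Rinv_1. apply Rinv_le_contravar; lra. }
    destruct (limC (r * beta / 2) ltac:(apply Rdiv_lt_0_compat; [apply Rmult_lt_0_compat|]; lra)) as [dC [HdC HlC]].
    set (e := Rmin (dC / 2) (t0 / 2)).
    assert (He0 : 0 < e) by (unfold e; apply Rmin_pos; lra).
    assert (He1 : e < dC) by (unfold e; pose proof (Rmin_l (dC / 2) (t0 / 2)); lra).
    assert (He2 : e < t0) by (unfold e; pose proof (Rmin_r (dC / 2) (t0 / 2)); lra).
    assert (exe : ex_RInt fC e 1) by (apply exC; lra).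
    assert (exa : ex_RInt fC e t0) by (apply ex_RInt_sub1 with 1; [lra|auto]).
    assert (exb : ex_RInt fC t0 1) by (apply ex_RInt_sub2 with e; [lra|auto]).
    assert (exb1 : ex_RInt fC t0 (t0 + r)) by (apply ex_RInt_sub1 with 1; [lra|auto]).
    assert (exb2 : ex_RInt fC (t0 + r) 1) by (apply ex_RInt_sub2 with t0; [lra|auto]).
    assert (Hpos' : forall x, 0 < x -> 0 <= fC x) by (intros; unfold fC; apply Rdiv_le_0_compat; [apply pow2_ge_0|lra]).
    assert (I1 : 0 <= RInt fC e t0) by (apply RInt_ge_0; [lra|auto|intros; apply Hpos'; lra]).
    assert (I3 : 0 <= RInt fC (t0 + r) 1) by (apply RInt_ge_0; [lra|auto|intros; apply Hpos'; lra]).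
    assert (I2 : r * beta <= RInt fC t0 (t0 + r)).
    { assert (Ec : RInt (fun _ => beta) t0 (t0 + r) = r * beta) by (rewrite RInt_const_R; replace (t0 + r - t0) with r by ring; reflexivity).
      rewrite <- Ec.
      apply RInt_le_R. lra. apply ex_RInt_cont_R. intros; apply continuity_pt_const; unfold constant; auto.
      auto. intros x Hx; apply Hlow; lra. }
    assert (K2 := HlC e ltac:(lra) ltac:(lra)).
    rewrite <- (RInt_Chasles_R fC e t0 1) in K2 by auto.
    rewrite <- (RInt_Chasles_R fC t0 (t0 + r) 1) in K2 by auto.
    apply Rabs_def2 in K2.
    assert (0 < r * beta) by (apply Rmult_lt_0_compat; lra). lra. }
  rewrite Hq. apply (Rmult_le_reg_r C). auto.
  unfold Rdiv. rewrite Rmult_assoc, Rinv_l, Rmult_1_r by lra. lra.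
Qed.

Definition a0 := m 1.
Definition Rf (t : R) := if Rlt_dec 0 t then m t / t^2 else c0 / 2.
Definition phi0 (t : R) := t * (Rf t - a0).
Definition dphi0 (t : R) := fc t - Rf t - a0.

Lemma Rf_pos t : 0 < t -> Rf t = m t / t^2.
Proof. intros H. unfold Rf. destruct (Rlt_dec 0 t); [reflexivity|lra]. Qed.

Lemma Rf_0 : Rf 0 = c0 / 2.
Proof. unfold Rf. destruct (Rlt_dec 0 0); [lra|reflexivity]. Qed.

Lemma Rf_deriv t : 0 < t -> derivable_pt_lim Rf t (fc t / t - 2 * Rf t / t).
Proof.
  intros Ht.
  assert (H := derivable_pt_lim_div m (fun y => y^2) t _ _ (m_deriv t)
     (derivable_pt_lim_pow t 2) ltac:(apply pow_nonzero; lra)).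
  apply deriv_loc with (f := (m / (fun y => y^2))%F) (d := t). auto.
  intros y Hy. apply Rabs_def2 in Hy. rewrite Rf_pos by lra. reflexivity.
  match type of H with derivable_pt_lim _ _ ?L => replace (fc t / t - 2 * Rf t / t) with L end.
  exact H. rewrite Rf_pos by lra. unfold Rsqr. simpl. field. lra.
Qed.

Lemma m_near0 eps : 0 < eps -> exists d, 0 < d /\ forall y, 0 < y < d -> Rabs (m y / y^2 - c0 / 2) < eps.
Proof.
  intros He. destruct (fc_cont 0 (eps) He) as [d [Hd H]].
  exists d; split; auto. intros y Hy.
  assert (Hf : forall s, 0 < s < y -> Rabs (fc s - c0) < eps).
  { intros s Hs. apply (H s). split. split. exact I. lra.
    change (Rabs (s - 0) < d). rewrite Rminus_0_r, Rabs_right; lra. }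
  assert (U : m y <= (c0 + eps) * y^2 / 2).
  { enough ((c0 + eps) * 0^2/2 - m 0 <= (c0 + eps) * y^2/2 - m y) by (rewrite m0 in *; lra).
    apply (mono_up (fun x => (c0 + eps) * x^2/2 - m x) (fun x => (c0 + eps) * x - x * fc x)); try lra.
    - intros c _. apply derivable_continuous_pt. exists ((c0 + eps) * c - c * fc c).
      apply (derivable_pt_lim_minus (fun y => (c0 + eps) * y^2/2) m). apply dsq. apply m_deriv.
    - intros c _. apply (derivable_pt_lim_minus (fun y => (c0 + eps) * y^2/2) m). apply dsq. apply m_deriv.
    - intros c Hc. specialize (Hf c Hc). apply Rabs_def2 in Hf.
      replace ((c0 + eps) * c - c * fc c) with (c * (c0 + eps - fc c)) by ring.
      apply Rmult_le_pos; lra. }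
  assert (L : (c0 - eps) * y^2 / 2 <= m y).
  { enough (m 0 - (c0 - eps) * 0^2/2 <= m y - (c0 - eps) * y^2/2) by (rewrite m0 in *; lra).
    apply (mono_up (fun x => m x - (c0 - eps) * x^2/2) (fun x => x * fc x - (c0 - eps) * x)); try lra.
    - intros c _. apply derivable_continuous_pt. exists (c * fc c - (c0 - eps) * c).
      apply (derivable_pt_lim_minus m (fun y => (c0 - eps) * y^2/2)). apply m_deriv. apply dsq.
    - intros c _. apply (derivable_pt_lim_minus m (fun y => (c0 - eps) * y^2/2)). apply m_deriv. apply dsq.
    - intros c Hc. specialize (Hf c Hc). apply Rabs_def2 in Hf.
      replace (c * fc c - (c0 - eps) * c) with (c * (fc c - (c0 - eps))) by ring.
      apply Rmult_le_pos; lra. }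
  assert (Hy2 : 0 < y^2) by (apply pow_lt; lra).
  assert (E1 : m y / y^2 <= (c0 + eps) / 2).
  { apply (Rmult_le_reg_r (y^2)). auto. unfold Rdiv. rewrite Rmult_assoc, Rinv_l, Rmult_1_r by lra. lra. }
  assert (E2 : (c0 - eps) / 2 <= m y / y^2).
  { apply (Rmult_le_reg_r (y^2)). auto. unfold Rdiv. rewrite (Rmult_assoc (m y)), Rinv_l, Rmult_1_r by lra. lra. }
  apply Rabs_def1; lra.
Qed.

Lemma Rf_cont t : continuity_pt Rf t.
Proof.
  destruct (Rlt_le_dec 0 t) as [Ht|Ht].
  - apply derivable_continuous_pt. exists (fc t / t - 2 * Rf t / t). apply Rf_deriv; auto.
  - destruct (Rle_lt_or_eq_dec _ _ Ht) as [Hlt|Heq].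
    + apply derivable_continuous_pt. exists 0.
      apply deriv_loc with (f := fct_cte (c0 / 2)) (d := - t). lra.
      intros y Hy. apply Rabs_def2 in Hy. unfold Rf, fct_cte. destruct (Rlt_dec 0 y); [lra|reflexivity].
      apply derivable_pt_lim_const.
    + subst t. intros eps He. destruct (m_near0 eps He) as [d [Hd H]].
      exists d; split; [lra|]. intros x [_ Hx]. change (Rabs (x - 0) < d) in Hx.
      change (Rabs (Rf x - Rf 0) < eps). rewrite Rf_0.
      rewrite Rminus_0_r in Hx. unfold Rf. destruct (Rlt_dec 0 x) as [Hx0|Hx0].
      * apply H. apply Rabs_def2 in Hx. lra.
      * rewrite Rminus_diag, Rabs_R0. lra.
Qed.

Lemma phi0_deriv t : 0 < t -> derivable_pt_lim phi0 t (dphi0 t).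
Proof.
  intros Ht. unfold phi0, dphi0.
  assert (H := derivable_pt_lim_mult id (Rf - fct_cte a0)%F t _ _ (derivable_pt_lim_id t)
    (derivable_pt_lim_minus Rf (fct_cte a0) t _ _ (Rf_deriv t Ht) (derivable_pt_lim_const a0 t))).
  match type of H with derivable_pt_lim _ _ ?L => replace (fc t - Rf t - a0) with L end.
  exact H. unfold id, fct_cte, minus_fct. field. lra.
Qed.

Lemma phi0_cont t : continuity_pt phi0 t.
Proof. unfold phi0. apply (continuity_pt_mult id (fun y => Rf y - a0)).
  apply derivable_continuous_pt, derivable_pt_id.
  apply (continuity_pt_minus Rf (fct_cte a0)). apply Rf_cont.
  apply continuity_pt_const; unfold constant; auto. Qed.

Lemma dphi0_cont t : continuity_pt dphi0 t.
Proof. unfold dphi0. apply (continuity_pt_minus (fun y => fc y - Rf y) (fct_cte a0)).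
  apply (continuity_pt_minus fc Rf). apply fc_cont. apply Rf_cont.
  apply continuity_pt_const; unfold constant; auto. Qed.

Lemma dphi0_deriv t : 0 < t < 1 ->
  derivable_pt_lim dphi0 t (p * Qp p (v t) * dv t - (fc t / t - 2 * Rf t / t)).
Proof.
  intros Ht. unfold dphi0.
  assert (H := derivable_pt_lim_minus (fc - Rf)%F (fct_cte a0) t _ _
    (derivable_pt_lim_minus fc Rf t _ _ (fc_deriv t Ht) (Rf_deriv t ltac:(lra)))
    (derivable_pt_lim_const a0 t)).
  rewrite Rminus_0_r in H. exact H.
Qed.

Lemma phi0_1 : phi0 1 = 0.
Proof. unfold phi0, a0. rewrite Rf_pos by lra. field. Qed.

Lemma fc_1 : fc 1 = 0.
Proof. rewrite fc_eq by lra. rewrite Hv1. apply Pp_0. Qed.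

Lemma Qvc_cont t : continuity_pt (fun y => Qp p (vc y)) t.
Proof. apply (continuity_pt_comp vc (Qp p)). apply vc_cont. apply Qp_cont; auto. apply vc_nonneg. Qed.

Definition GA (t : R) := t * (dphi0 t)^2.
Definition GC (t : R) := t * (Rf t - a0)^2.
Definition GN (t : R) := t * ((dphi0 t)^2 - p * Qp p (vc t) * (phi0 t)^2).

Lemma GA_cont t : continuity_pt GA t.
Proof. unfold GA. apply (continuity_pt_mult id (fun y => (dphi0 y)^2)).
  apply derivable_continuous_pt, derivable_pt_id.
  apply (continuity_pt_comp dphi0 (fun y => y^2)). apply dphi0_cont.
  apply derivable_continuous_pt. apply derivable_pow. Qed.

Lemma GC_cont t : continuity_pt GC t.
Proof. unfold GC. apply (continuity_pt_mult id (fun y => (Rf y - a0)^2)).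
  apply derivable_continuous_pt, derivable_pt_id.
  apply (continuity_pt_comp (fun y => Rf y - a0) (fun y => y^2)).
  apply (continuity_pt_minus Rf (fct_cte a0)). apply Rf_cont.
  apply continuity_pt_const; unfold constant; auto.
  apply derivable_continuous_pt. apply derivable_pow. Qed.

Lemma GN_cont t : continuity_pt GN t.
Proof. unfold GN. apply (continuity_pt_mult id (fun y => (dphi0 y)^2 - p * Qp p (vc y) * (phi0 y)^2)).
  apply derivable_continuous_pt, derivable_pt_id.
  apply (continuity_pt_minus (fun y => (dphi0 y)^2) (fun y => p * Qp p (vc y) * (phi0 y)^2)).
  apply (continuity_pt_comp dphi0 (fun y => y^2)). apply dphi0_cont.
  apply derivable_continuous_pt. apply derivable_pow.
  apply (continuity_pt_mult (fun y => p * Qp p (vc y)) (fun y => (phi0 y)^2)).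
  apply (continuity_pt_scal (fun y => Qp p (vc y))). apply Qvc_cont.
  apply (continuity_pt_comp phi0 (fun y => y^2)). apply phi0_cont.
  apply derivable_continuous_pt. apply derivable_pow. Qed.

Definition Wf (t : R) := t * phi0 t * dphi0 t - a0 * t^2 * fc t + 2 * a0 * m t.

Lemma Wf_deriv t : 0 < t < 1 -> derivable_pt_lim Wf t
  ((1 * phi0 t + t * dphi0 t) * dphi0 t
   + t * phi0 t * (p * Qp p (v t) * dv t - (fc t / t - 2 * Rf t / t))
   - a0 * ((2 * t) * fc t + t^2 * (p * Qp p (v t) * dv t))
   + 2 * a0 * (t * fc t)).
Proof.
  intros Ht. unfold Wf.
  assert (D1 := phi0_deriv t ltac:(lra)). assert (D2 := dphi0_deriv t Ht).
  assert (D3 := fc_deriv t Ht). assert (D4 := m_deriv t).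
  apply is_derive_Reals. auto_derive.
  - repeat split; first [exact I | eapply ex_D; eassumption].
  - rewrite (D_eq _ _ _ D1), (D_eq _ _ _ D2), (D_eq _ _ _ D3), (D_eq _ _ _ D4). ring.
Qed.

Lemma Wf_cont t : continuity_pt Wf t.
Proof.
  unfold Wf.
  apply (continuity_pt_plus (fun t => t * phi0 t * dphi0 t - a0 * t^2 * fc t) (fun t => 2 * a0 * m t)).
  apply (continuity_pt_minus (fun t => t * phi0 t * dphi0 t) (fun t => a0 * t^2 * fc t)).
  apply (continuity_pt_mult (fun t => t * phi0 t) dphi0).
  apply (continuity_pt_mult id phi0). apply derivable_continuous_pt, derivable_pt_id.
  apply phi0_cont. apply dphi0_cont.
  apply (continuity_pt_mult (fun t => a0 * t^2) fc).
  apply (continuity_pt_scal (fun t => t^2)). apply derivable_continuous_pt. apply derivable_pow.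
  apply fc_cont.
  apply (continuity_pt_scal m). apply m_cont.
Qed.

Lemma NC_upper : RInt GN 0 1 + RInt GC 0 1 <= 2 * a0^2.
Proof.
  assert (exN : ex_RInt GN 0 1) by (apply ex_RInt_cont_R; intros; apply GN_cont).
  assert (exC : ex_RInt GC 0 1) by (apply ex_RInt_cont_R; intros; apply GC_cont).
  rewrite <- RInt_plus_R by auto.
  assert (W1 : Wf 1 = 2 * a0^2).
  { unfold Wf. rewrite phi0_1, fc_1. unfold a0. ring. }
  assert (W0 : Wf 0 = 0).
  { unfold Wf. rewrite m0. ring. }
  rewrite <- W1. replace (Wf 1) with (Wf 1 - Wf 0) by (rewrite W0; ring).
  apply (darboux_up (fun x => GN x + GC x) Wf (fun t =>
   (1 * phi0 t + t * dphi0 t) * dphi0 t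
   + t * phi0 t * (p * Qp p (v t) * dv t - (fc t / t - 2 * Rf t / t))
   - a0 * ((2 * t) * fc t + t^2 * (p * Qp p (v t) * dv t))
   + 2 * a0 * (t * fc t)) 0 1). lra.
  apply RInt_correct_R. apply ex_RInt_plus_R; auto.
  intros; apply Wf_cont.
  intros x Hx. apply Wf_deriv; auto.
  intros t Ht. assert (Hm := m_pos t ltac:(lra)).
  unfold GN, GC. rewrite vc_id by lra. unfold phi0, dphi0.
  rewrite dv_eq by lra. rewrite !Rf_pos by lra.
  set (Q := Qp p (v t)). assert (HQ : 0 <= Q) by apply Qp_nonneg.
  match goal with |- ?A <= ?B => assert (E : B - A = a0^2 * p * t^3 * Q) end.
  { field. lra. }
  assert (0 <= a0^2 * p * t^3 * Q).
  { apply Rmult_le_pos; [|auto]. apply Rmult_le_pos; [|apply pow_le; lra].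
    apply Rmult_le_pos; [apply pow2_ge_0|lra]. }
  lra.
Qed.

Definition eps0 := sqrt (M / (p * c0)).

Lemma c0_eq : c0 = Rpower M p.
Proof. unfold c0. rewrite fc_eq by lra. apply Pp_pos. apply M_pos. Qed.

Lemma c0_pos : 0 < c0.
Proof. pose proof c0_ge. pose proof M_pos. lra. Qed.

Lemma eps0_sq : eps0^2 = M / (p * c0).
Proof. unfold eps0. apply pow2_sqrt. apply Rdiv_le_0_compat.
  pose proof M_pos; lra. pose proof c0_pos. apply Rmult_lt_0_compat; lra. Qed.

Lemma eps0_pos : 0 < eps0.
Proof. unfold eps0. apply sqrt_lt_R0. apply Rdiv_lt_0_compat. apply M_pos.
  pose proof c0_pos. apply Rmult_lt_0_compat; lra. Qed.

Lemma c0_eps : c0 * eps0^2 = M / p.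
Proof. rewrite eps0_sq. pose proof c0_pos. field. lra. Qed.

Lemma eps0_sq_le : eps0^2 <= / (4 * p).
Proof.
  rewrite eps0_sq. pose proof c0_pos. pose proof c0_ge. pose proof M_pos.
  apply (Rmult_le_reg_r (4 * p * c0)). apply Rmult_lt_0_compat; lra.
  replace (M / (p * c0) * (4 * p * c0)) with (4 * M) by (field; lra).
  replace (/ (4 * p) * (4 * p * c0)) with c0 by (field; lra). lra.
Qed.

Lemma eps0_small : 64 <= p -> eps0 <= / 16.
Proof.
  intros H. pose proof eps0_sq_le. pose proof eps0_pos.
  assert (/ (4 * p) <= / 256).
  { apply Rinv_le_contravar; lra. }
  apply Rnot_lt_le. intros K. assert (/16 * /16 < eps0 * eps0).
  { apply Rmult_le_0_lt_compat; lra. }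
  simpl in *. lra.
Qed.

Lemma fc_lower t : 0 <= t <= eps0 -> eps0 <= 1 -> c0 / 2 <= fc t.
Proof.
  intros Ht He. pose proof M_pos. pose proof c0_pos.
  assert (Hv : M * (1 - / 4 / p) <= v t).
  { eapply Rle_trans; [|apply v_lower; lra].
    assert (c0 * t^2 <= c0 * eps0^2).
    { apply Rmult_le_compat_l. lra. apply pow_incr. lra. }
    rewrite c0_eps in H1. replace (M * (1 - / 4 / p)) with (M - M / p / 4) by (field; lra). lra. }
  assert (Hw : 0 < 1 - / 4 / p).
  { assert (/ 4 / p < 1). { apply (Rmult_lt_reg_r p). lra. unfold Rdiv.
      rewrite Rmult_assoc, Rinv_l by lra. lra. } lra. }
  assert (Hwp : 0 < M * (1 - / 4 / p)) by (apply Rmult_lt_0_compat; lra).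
  rewrite fc_eq by lra. rewrite Pp_pos by lra.
  eapply Rle_trans; [|apply Rle_Rpower_l; [lra|split; [exact Hwp|exact Hv]]].
  rewrite <- Rpower_mult_distr by lra. rewrite <- c0_eq.
  pose proof (rpow_lower p (/ 4) Hp ltac:(lra)).
  unfold Rdiv. apply Rmult_le_compat_l; lra.
Qed.

Lemma m_eps : eps0 <= 1 -> c0 * eps0^2 / 4 <= m eps0.
Proof.
  intros He. pose proof eps0_pos.
  enough (m 0 - c0 / 2 * 0^2/2 <= m eps0 - c0 / 2 * eps0^2/2) by (rewrite m0 in *; lra).
  apply (mono_up (fun x => m x - c0 / 2 * x^2/2) (fun x => x * fc x - c0 / 2 * x)); try lra.
  - intros c _. apply derivable_continuous_pt. exists (c * fc c - c0 / 2 * c).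
    apply (derivable_pt_lim_minus m (fun y => c0 / 2 * y^2/2)). apply m_deriv. apply dsq.
  - intros c _. apply (derivable_pt_lim_minus m (fun y => c0 / 2 * y^2/2)). apply m_deriv. apply dsq.
  - intros c Hc. assert (c0 / 2 <= fc c) by (apply fc_lower; lra).
    replace (c * fc c - c0 / 2 * c) with (c * (fc c - c0 / 2)) by ring.
    apply Rmult_le_pos; lra.
Qed.

Lemma a0_pos : 0 < a0.
Proof. unfold a0. apply m_pos. lra. Qed.

Definition W2 (t : R) := (m t)^2 + 2 / (p + 1) * (t^2 * fc t * vc t) - 4 * M / (p + 1) * m t.

Lemma W2_deriv t : 0 < t < 1 -> derivable_pt_lim W2 t
  (2 * m t * (t * fc t) + 2 / (p + 1) * ((2 * t) * fc t * vc t
     + t^2 * (p * Qp p (v t) * dv t) * vc t + t^2 * fc t * dv t)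
   - 4 * M / (p + 1) * (t * fc t)).
Proof.
  intros Ht. unfold W2.
  assert (D3 := fc_deriv t Ht). assert (D4 := m_deriv t). assert (D5 := vc_deriv t Ht).
  apply is_derive_Reals. auto_derive.
  - repeat split; first [exact I | eapply ex_D; eassumption].
  - rewrite (D_eq _ _ _ D3), (D_eq _ _ _ D4), (D_eq _ _ _ D5). field. lra.
Qed.

Lemma W2_cont t : continuity_pt W2 t.
Proof.
  unfold W2.
  apply (continuity_pt_minus (fun t => (m t)^2 + 2 / (p + 1) * (t^2 * fc t * vc t)) (fun t => 4 * M / (p + 1) * m t)).
  apply (continuity_pt_plus (fun t => (m t)^2) (fun t => 2 / (p + 1) * (t^2 * fc t * vc t))).
  apply (continuity_pt_comp m (fun y => y^2)). apply m_cont.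
  apply derivable_continuous_pt. apply derivable_pow.
  apply (continuity_pt_scal (fun t => t^2 * fc t * vc t)).
  apply (continuity_pt_mult (fun t => t^2 * fc t) vc).
  apply (continuity_pt_mult (fun t => t^2) fc).
  apply derivable_continuous_pt. apply derivable_pow. apply fc_cont. apply vc_cont.
  apply (continuity_pt_scal m). apply m_cont.
Qed.

Lemma pohozaev : a0 <= 4 * M / (p + 1).
Proof.
  assert (H : - W2 0 <= - W2 1).
  { apply (mono_up (fun t => - W2 t) (fun t => - (2 * m t * (t * fc t) + 2 / (p + 1) * ((2 * t) * fc t * vc t
     + t^2 * (p * Qp p (v t) * dv t) * vc t + t^2 * fc t * dv t)
   - 4 * M / (p + 1) * (t * fc t)))). lra.
    - intros c _. apply (continuity_pt_opp W2). apply W2_cont.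
    - intros c Hc. apply (derivable_pt_lim_opp W2). apply W2_deriv; auto.
    - intros c Hc. rewrite vc_id by lra. rewrite dv_eq by lra.
      rewrite fc_eq by lra. rewrite Pp_eq.
      set (Q := Qp p (v c)).
      assert (HQ : 0 <= Q) by apply Qp_nonneg.
      assert (Hvc : 0 <= v c) by (apply v_nonneg; lra).
      assert (HvM : v c <= M) by (apply v_le_M; lra).
      match goal with |- 0 <= - ?X => assert (E : X = 4 / (p + 1) * c * (Q * v c) * (v c - M)) end.
      { field. split; lra. }
      rewrite E.
      assert (0 <= 4 / (p + 1) * c * (Q * v c) * (M - v c)).
      { apply Rmult_le_pos; [|lra]. apply Rmult_le_pos; [|apply Rmult_le_pos; auto].
        apply Rmult_le_pos; [apply Rdiv_le_0_compat; lra|lra]. }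
      replace (- (4 / (p + 1) * c * (Q * v c) * (v c - M))) with (4 / (p + 1) * c * (Q * v c) * (M - v c)) by ring.
      auto. }
  unfold W2 in H. rewrite m0, fc_1 in H.
  fold a0 in H. pose proof a0_pos.
  assert (a0 * a0 <= 4 * M / (p + 1) * a0) by (simpl in H; lra).
  apply (Rmult_le_reg_r a0); auto.
Qed.

Lemma C_lower : 64 <= p -> a0^2 * p / 4096 <= RInt GC 0 1.
Proof.
  intros H64. pose proof eps0_pos as He0. pose proof (eps0_small H64) as He1.
  pose proof eps0_sq_le as He2. pose proof M_pos. pose proof c0_pos. pose proof a0_pos.
  assert (Hme : M / p / 4 <= m eps0).
  { assert (K := m_eps ltac:(lra)). pose proof c0_eps. lra. }
  assert (Ha : a0 / 16 <= M / p / 4).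
  { assert (K := pohozaev).
    assert (4 * M / (p + 1) <= 4 * M / p).
    { unfold Rdiv. apply Rmult_le_compat_l. lra. apply Rinv_le_contravar; lra. }
    assert (E : M / p / 4 = 4 * M / p / 16) by (field; lra). lra. }
  set (L := a0^2 / (16384 * eps0^3)).
  assert (Hlow : forall t, eps0 <= t <= 2 * eps0 -> L <= GC t).
  { intros t Ht. unfold GC, L. rewrite Rf_pos by lra.
    assert (Hmt : a0 / 16 <= m t) by (assert (m eps0 <= m t) by (apply m_mono; lra); lra).
    assert (Ht2 : t^2 <= 4 * eps0^2) by (replace (4 * eps0^2) with ((2 * eps0)^2) by ring; apply pow_incr; lra).
    assert (Ht2' : 4 * eps0^2 <= / 64) by (simpl in *; nra).
    assert (Htp : 0 < t^2) by (apply pow_lt; lra).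
    set (y := m t / t^2 - a0).
    assert (Hyt : y * t^2 = m t - a0 * t^2) by (unfold y; field; lra).
    assert (Hy1 : a0 / 32 <= y * t^2) by (rewrite Hyt; nra).
    assert (Hy0 : 0 < y).
    { apply Rnot_le_lt. intros K. assert (y * t^2 <= 0) by (apply Rmult_le_0_r; lra). lra. }
    assert (Hy2 : a0 / (128 * eps0^2) <= y).
    { assert (y * t^2 <= y * (4 * eps0^2)) by (apply Rmult_le_compat_l; lra).
      assert (He2p : 0 < eps0^2) by (apply pow_lt; lra).
      apply (Rmult_le_reg_r (4 * eps0^2)). lra.
      replace (a0 / (128 * eps0^2) * (4 * eps0^2)) with (a0 / 32) by (field; lra). lra. }
    assert (Hy3 : (a0 / (128 * eps0^2))^2 <= y^2).
    { apply pow_incr. split; [|auto]. apply Rdiv_le_0_compat. lra.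
      assert (0 < eps0^2) by (apply pow_lt; lra). lra. }
    replace (a0^2 / (16384 * eps0^3)) with (eps0 * (a0 / (128 * eps0^2))^2) by (field; lra).
    apply Rmult_le_compat; try lra. apply pow2_ge_0. }
  assert (exC : forall x y, ex_RInt GC x y) by (intros; apply ex_RInt_cont_R; intros; apply GC_cont).
  assert (GC_nn : forall t, 0 <= t -> 0 <= GC t).
  { intros t Ht. unfold GC. apply Rmult_le_pos; [lra|apply pow2_ge_0]. }
  rewrite <- (RInt_Chasles_R GC 0 eps0 1) by auto.
  rewrite <- (RInt_Chasles_R GC eps0 (2 * eps0) 1) by auto.
  assert (I1 : 0 <= RInt GC 0 eps0) by (apply RInt_ge_0; [lra|auto|intros; apply GC_nn; lra]).
  assert (I3 : 0 <= RInt GC (2 * eps0) 1) by (apply RInt_ge_0; [lra|auto|intros; apply GC_nn; lra]).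
  assert (I2 : eps0 * L <= RInt GC eps0 (2 * eps0)).
  { assert (Ec : RInt (fun _ => L) eps0 (2 * eps0) = eps0 * L) by (rewrite RInt_const_R; replace (2 * eps0 - eps0) with eps0 by ring; reflexivity).
    rewrite <- Ec. apply RInt_le_R. lra. apply ex_RInt_cont_R; intros; apply continuity_pt_const; unfold constant; auto. auto. intros x Hx; apply Hlow; lra. }
  assert (E2 : a0^2 * p / 4096 <= eps0 * L).
  { unfold L. replace (eps0 * (a0^2 / (16384 * eps0^3))) with (a0^2 / 16384 / eps0^2) by (field; lra).
    assert (He2p : 0 < eps0^2) by (apply pow_lt; lra).
    apply (Rmult_le_reg_r (eps0^2)). auto.
    replace (a0^2 / 16384 / eps0^2 * eps0^2) with (a0^2 / 16384) by (field; lra).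
    assert (eps0^2 * (4 * p) <= 1).
    { apply (Rmult_le_reg_r (/ (4 * p))). apply Rinv_0_lt_compat; lra.
      rewrite Rmult_assoc, Rinv_r, Rmult_1_r, Rmult_1_l by lra. auto. }
    assert (0 <= a0^2) by apply pow2_ge_0.
    replace (a0^2 * p / 4096 * eps0^2) with (a0^2 / 16384 * (eps0^2 * (4 * p))) by (field).
    assert (a0^2 / 16384 * (eps0^2 * (4 * p)) <= a0^2 / 16384 * 1) by (apply Rmult_le_compat_l; lra).
    lra. }
  lra.
Qed.

Lemma upper_bound : 64 <= p -> exists q, rayleigh_set p v q /\ q <= -1 + 8192 / p.
Proof.
  intros H64. pose proof a0_pos as Ha. pose proof (C_lower H64) as HC. pose proof NC_upper as HNC.
  pose proof eps0_pos. pose proof (eps0_small H64).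
  set (N := RInt GN 0 1) in *. set (C := RInt GC 0 1) in *.
  assert (Cpos : 0 < C).
  { assert (0 < a0^2 * p / 4096).
    { apply Rdiv_lt_0_compat; [apply Rmult_lt_0_compat; [apply pow_lt|]|]; lra. } lra. }
  exists (N / C). split.
  - exists phi0, dphi0, (RInt GA 0 1), C, N.
    split; [intros t Ht; apply phi0_deriv; lra|].
    split; [intros t Ht; apply phi0_cont|].
    split.
    { intros eps' He'. destruct (phi0_cont 1 eps' He') as [d [Hd Hcl]].
      exists d; split; auto. intros s Hs. destruct (Req_dec s 1) as [->|Hne].
      rewrite Rminus_diag, Rabs_R0; lra.
      apply (Hcl s). split. split. exact I. intro E; apply Hne; auto.
      change (Rabs (s - 1) < d). rewrite Rabs_left; lra. }
    split; [apply phi0_1|].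
    split.
    { exists eps0. split. lra. unfold phi0.
      assert (0 < Rf eps0 - a0); [|apply Rgt_not_eq, Rmult_lt_0_compat; lra].
      rewrite Rf_pos by lra.
      assert (K := m_eps ltac:(lra)). rewrite c0_eps in K.
      assert (K2 := pohozaev).
      assert (Hsq : 0 < eps0^2) by (apply pow_lt; lra).
      assert (eps0^2 <= / 256) by (replace (/256) with ((/16)^2) by field; apply pow_incr; lra).
      assert (m eps0 / eps0^2 >= 256 * m eps0).
      { apply Rle_ge. apply (Rmult_le_reg_r (eps0^2)). auto.
        replace (m eps0 / eps0^2 * eps0^2) with (m eps0) by (field; lra).
        assert (0 < m eps0) by (apply m_pos; lra). nra. }
      assert (4 * M / (p + 1) <= 4 * M / p).
      { unfold Rdiv. apply Rmult_le_compat_l. pose proof M_pos; lra. apply Rinv_le_contravar; lra. }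
      assert (M / p / 4 * 16 = 4 * M / p) by (field; lra).
      lra. }
    split.
    { apply imp_of_cont. apply GA_cont. intros; reflexivity. }
    split.
    { apply imp_of_cont. apply GC_cont. intros t Ht. unfold GC, phi0. field. lra. }
    split.
    { apply imp_of_cont. apply GN_cont. intros t Ht. unfold GN. rewrite vc_id by lra. reflexivity. }
    reflexivity.
  - fold N C in HNC.
    assert (N / C + 1 = (N + C) / C) by (field; lra).
    assert ((N + C) / C <= 2 * a0^2 / C).
    { unfold Rdiv. apply Rmult_le_compat_r. left; apply Rinv_0_lt_compat; lra. lra. }
    assert (2 * a0^2 / C <= 8192 / p).
    { assert (Ha2 : 0 < a0^2) by (apply pow_lt; lra).
      apply (Rmult_le_reg_r C). auto. replace (2 * a0^2 / C * C) with (2 * a0^2) by (field; lra).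
      apply Rle_trans with (8192 / p * (a0^2 * p / 4096)).
      right; field; lra. apply Rmult_le_compat_l. apply Rdiv_le_0_compat; lra. lra. }
    lra.
Qed.

End Sol.

Theorem mainTheorem7 (v : R -> R -> R) (nu1 : R -> R) :
  (forall p, 1 < p -> LE_positive_solution p (v p)) ->
  (forall p, 1 < p -> is_glb_R (rayleigh_set p (v p)) (nu1 p)) ->
  forall eps, 0 < eps -> exists M, 1 < M /\
    forall p, M < p -> Rabs (nu1 p - (-1)) < eps.
Proof.
  intros Hsol Hglb eps Heps.
  exists (Rmax 64 (8192 / eps) + 1). split.
  { pose proof (Rmax_l 64 (8192 / eps)). lra. }
  intros p Hp.
  pose proof (Rmax_l 64 (8192 / eps)). pose proof (Rmax_r 64 (8192 / eps)).
  assert (H64 : 64 <= p) by lra.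
  destruct (Hsol p ltac:(lra)) as [Hpos [Hv1 [Hlc [Hd0 [dv [Hdv Hdd]]]]]].
  destruct (Hglb p ltac:(lra)) as [Hlb Hgr].
  assert (L : -1 <= nu1 p).
  { apply Hgr. intros x Hx. apply (lower_bound p (v p) dv); auto; lra. }
  destruct (upper_bound p (v p) dv ltac:(lra) Hpos Hv1 Hlc Hd0 Hdv Hdd H64) as [q [Hq Hq2]].
  assert (U : nu1 p <= q) by (apply Hlb; auto).
  assert (8192 / p < eps).
  { apply (Rmult_lt_reg_r p). lra. unfold Rdiv. rewrite Rmult_assoc, Rinv_l, Rmult_1_r by lra.
    assert (8192 / eps < p) by lra.
    apply (Rmult_lt_reg_r (/ eps)). apply Rinv_0_lt_compat; lra.
    replace (eps * p * / eps) with p by (field; lra). exact H1. }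
  rewrite Rabs_right by lra. lra.
Qed.
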